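(* Let $n,k$ be positive integers and $t$ a real number with $2k<n\leq tk$. Let $h(n,k)=\binom{n-1}{k-1}-\binom{n-k-1}{k-1}+1$. Then \[ \frac{h(n,k)^2}{\binom{n-1}{k-1}^2}>1-2\left(\frac{2t-3}{2t-1}\right)^{k-1}. \] *)

(* Defs.v *)
From mathcomp Require Import all_boot.
From Stdlib Require Import Reals.

(* h(n,k) = C(n-1,k-1) - C(n-k-1,k-1) + 1, as a natural number.
   The subtraction is never truncated since C(n-k-1,k-1) <= C(n-1,k-1). *)
Definition h (n k : nat) : nat := 'C(n.-1, k.-1) - 'C(n - k - 1, k.-1) + 1.

(* Main.v *)
Require Import Defs.
From mathcomp Require Import all_boot zify.
From Stdlib Require Import Reals Lra Lia Psatz.

Section RealPart.
Local Open Scope R_scope.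
Variable c : R.
Hypothesis c_pos : 0 < c.

Definition g (x : R) := 1 - c / x.
Fixpoint P (s : R) (j : nat) : R :=
  match j with O => 1 | S j => g s * P (s + 1) j end.

Lemma P_snoc j : forall s, P s (S j) = P s j * g (s + INR j).
Proof.
induction j as [|j IH]; intros s.
- simpl. rewrite Rplus_0_r. ring.
- change (P s (S (S j))) with (g s * P (s+1) (S j)).
  rewrite IH. rewrite S_INR. simpl.
  replace (s + 1 + INR j) with (s + (INR j + 1)) by ring. ring.
Qed.

Lemma g_nonneg x : c <= x -> 0 <= g x.
Proof.
intros H. unfold g. assert (0 < x) by lra.
assert (c / x <= 1). { apply (Rmult_le_reg_r x). { lra. } unfold Rdiv.
  rewrite Rmult_assoc (Rinv_l x). { lra. } lra. }
lra.
Qed.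

Lemma P_nonneg j : forall s, c <= s -> 0 <= P s j.
Proof.
induction j as [|j IH]; intros s Hs; simpl.
- lra.
- apply Rmult_le_pos. + apply g_nonneg; lra. + apply IH; lra.
Qed.

Lemma pair a b : c <= a -> c <= b -> g a * g b <= g ((a+b)/2) ^ 2.
Proof.
intros Ha Hb. unfold g.
set m := (a+b)/2.
assert (0 < a) by lra. assert (0 < b) by lra. assert (Hm : 0 < m) by (unfold m; lra).
replace (1 - c/a) with ((a-c)/a) by (field; lra).
replace (1 - c/b) with ((b-c)/b) by (field; lra).
replace (1 - c/m) with ((m-c)/m) by (field; lra).
replace ((a - c) / a * ((b - c) / b)) with (((a-c)*(b-c)) / (a*b)) by (field; lra).
replace (((m - c) / m)^2) with ((m-c)^2/(m^2)) by (field; lra).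
assert (0 < a*b) by nra. assert (0 < m^2) by nra.
apply (Rmult_le_reg_r (a*b*m^2)). { nra. }
replace ((a - c) * (b - c) / (a * b) * (a * b * m ^ 2)) with ((a - c) * (b - c) * m^2) by (field; lra).
replace ((m - c) ^ 2 / m ^ 2 * (a * b * m ^ 2)) with ((m - c) ^ 2 * (a*b)) by (field; lra).
assert (m^2 - a*b = ((a-b)/2)^2) by (unfold m; field).
assert (0 <= ((a-b)/2)^2) by apply pow2_ge_0.
assert ((m - c) ^ 2 * (a*b) - (a - c) * (b - c) * m^2 = c*(2*m - c) * (m^2 - a*b)).
{ replace (a+b) with (2*m) in * by (unfold m; field). 
  replace ((a - c) * (b - c)) with (a*b - c*(a+b) + c*c) by ring.
  replace (a+b) with (2*m) by (unfold m; field). ring. }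
assert (0 <= c*(2*m-c)) by (unfold m; nra).
nra.
Qed.

Lemma P_bound j : forall s, c <= s ->
  P s j <= g (s + (INR j - 1)/2) ^ j /\ P s (S j) <= g (s + (INR (S j) - 1)/2) ^ (S j).
Proof.
induction j as [|j IH]; intros s Hs.
- simpl. split. { lra. } assert (E: s + (1-1)/2 = s) by field. rewrite E. lra.
- split. { apply (IH s Hs). }
  change (P s (S (S j))) with (g s * P (s+1) (S j)).
  rewrite P_snoc.
  destruct (IH (s+1)) as [H1 _]. { lra. }
  set m := s + (INR (S (S j)) - 1)/2.
  assert (Em : s + 1 + (INR j - 1)/2 = m) by (unfold m; rewrite !S_INR; field).
  rewrite Em in H1.
  assert (Ep : (s + INR (S j)  + s)/2 = m) by (unfold m; rewrite !S_INR; field).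
  assert (Hpair := pair s (s + 1 + INR j) Hs ltac:(pose proof (pos_INR j); lra)).
  replace ((s + (s + 1 + INR j))/2) with m in Hpair by (unfold m; rewrite !S_INR; field).
  assert (0 <= P (s+1) j) by (apply P_nonneg; lra).
  assert (0 <= g s) by (apply g_nonneg; lra).
  assert (0 <= g (s + 1 + INR j)) by (apply g_nonneg; pose proof (pos_INR j); lra).
  replace (s + 1 + INR j) with (s + 1 + INR j) in *.
  assert (0 <= g m ^ j) by (apply pow_le; apply g_nonneg; unfold m; rewrite !S_INR; pose proof (pos_INR j); lra).
  replace (g s * (P (s + 1) j * g (s + 1 + INR j))) with ((g s * g (s+1+INR j)) * P (s+1) j) by ring.
  replace (g m ^ S (S j)) with (g m ^ 2 * g m ^ j) by (simpl; ring).
  apply Rmult_le_compat. all: try nra.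
Qed.
End RealPart.

Lemma INR_subn a b : (b <= a)%N -> INR (a - b) = (INR a - INR b)%R.
Proof.
move/subnK => E. rewrite -[in RHS]E plus_INR. lra.
Qed.

Lemma INR_muln a b : INR (a * b) = (INR a * INR b)%R.
Proof. by rewrite mult_INR. Qed.

Lemma ratio (k A : nat) : (0 < k)%N -> forall j, (j <= A)%N ->
  INR (A ^_ j) = (P (INR k) (INR (A + k - j) + 1) j * INR ((A + k) ^_ j))%R.
Proof.
move=> kpos; elim=> [|j IH] Hj.
- rewrite !ffactn0 /=. lra.
- have Hj' : (j <= A)%N by apply: ltnW.
  rewrite !ffactnSr !INR_muln (IH Hj').
  have -> : (INR (A + k - j.+1) + 1 = INR (A + k - j))%R.
  { rewrite !INR_subn; try (apply/leP; lia). rewrite S_INR. lra. }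
  change (P (INR k) (INR (A + k - j)) j.+1) with
     (g (INR k) (INR (A + k - j)) * P (INR k) (INR (A + k - j) + 1) j)%R.
  have Hs : (INR k <= INR (A + k - j))%R.
  { apply le_INR. apply/leP. lia. }
  have kp : (0 < INR k)%R by apply lt_0_INR; apply/ltP.
  rewrite /g.
  have -> : INR (A - j) = (INR (A + k - j) - INR k)%R.
  { rewrite !INR_subn; try (apply/leP; lia). rewrite plus_INR. lra. }
  field. lra.
Qed.

Theorem proposition1p8 (n k : nat) (t : R) :
  (0 < k)%N -> (0 < n)%N -> (k.*2 < n)%N -> (INR n <= t * INR k)%R ->
  (1 - 2 * ((2 * t - 3) / (2 * t - 1)) ^ (k.-1)
    < (INR (h n k)) ^ 2 / (INR 'C(n.-1, k.-1)) ^ 2)%R.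
Proof.
move=> kpos npos k2n Ht.
set A := (n - k - 1)%N.
set j := k.-1.
have En1 : n.-1 = (A + k)%N by rewrite /A; lia.
have Ej : (j <= A)%N by rewrite /j /A; lia.
have kp : (0 < INR k)%R by apply lt_0_INR; apply/ltP.
have Hr := @ratio k A kpos j Ej.
have fpos : (0 < INR (j`!))%R by apply lt_0_INR; apply/ltP; apply fact_gt0.
set N := 'C(n.-1, j).
set M := 'C(n - k - 1, j).
have HN : INR (A ^_ j) = (INR M * INR (j`!))%R by rewrite -INR_muln bin_ffact.
have HN2 : INR ((A + k) ^_ j) = (INR N * INR (j`!))%R by rewrite -INR_muln /N En1 bin_ffact.
set s0 := (INR (A + k - j) + 1)%R.
have Hs0 : (INR k <= s0)%R.
{ rewrite /s0 INR_subn; last (apply/leP; lia). rewrite plus_INR.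
  have : (INR j <= INR A)%R by apply le_INR; apply/leP. lra. }
have HMN : INR M = (P (INR k) s0 j * INR N)%R.
{ rewrite HN HN2 in Hr. apply (Rmult_eq_reg_r (INR (j`!))); last lra.
  rewrite Hr /s0. ring. }
have Npos : (0 < INR N)%R.
{ apply lt_0_INR; apply/ltP. rewrite /N bin_gt0. lia. }
set m := (INR n - INR k / 2)%R.
have Em : (s0 + (INR j - 1) / 2 = m)%R.
{ rewrite /s0 /m INR_subn; last (apply/leP; lia). rewrite plus_INR.
  have -> : INR A = (INR n - INR k - 1)%R.
  { rewrite /A !INR_subn; try (apply/leP; lia). change (INR 1) with 1%R. lra. }
  have -> : INR k = (INR j + 1)%R by rewrite /j -S_INR; congr INR; lia.
  field. }
have [Hb _] := @P_bound (INR k) kp j s0 Hs0.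
rewrite Em in Hb.
have k2nR : (2 * INR k + 1 <= INR n)%R.
{ have -> : (2 * INR k + 1 = INR (k.*2.+1))%R by rewrite S_INR -addnn plus_INR; lra.
  apply le_INR; apply/leP; lia. }
have mpos : (INR k <= m)%R by rewrite /m; lra.
have tk : (2 * INR k + 1 <= t * INR k)%R by lra.
have t2 : (2 < t)%R.
{ apply (Rmult_lt_reg_r (INR k)); first lra. lra. }
have Hg : (g (INR k) m <= (2 * t - 3) / (2 * t - 1))%R.
{ rewrite /g.
  have -> : ((2 * t - 3) / (2 * t - 1) = 1 - 2 / (2 * t - 1))%R by field; lra.
  suff : (2 / (2 * t - 1) <= INR k / m)%R by lra.
  have mp : (0 < m)%R by lra.
  apply (Rmult_le_reg_r ((2 * t - 1) * m)); first nra.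
  have -> : (2 / (2 * t - 1) * ((2 * t - 1) * m) = 2 * m)%R by field; lra.
  have -> : (INR k / m * ((2 * t - 1) * m) = INR k * (2 * t - 1))%R by field; lra.
  rewrite /m. lra. }
have Hgp : (0 <= g (INR k) m)%R by apply g_nonneg; lra.
have HQ : (P (INR k) s0 j <= ((2 * t - 3) / (2 * t - 1)) ^ j)%R.
{ apply (Rle_trans _ _ _ Hb). apply pow_incr; split; lra. }
set Q := (((2 * t - 3) / (2 * t - 1)) ^ j)%R in HQ *.
have MleN : (M <= N)%N by rewrite /M /N; apply leq_bin2l; lia.
have Mnn : (0 <= INR M)%R by apply pos_INR.
have Hh : INR (h n k) = (INR N - INR M + 1)%R.
{ rewrite /h -/j -/N -/M plus_INR INR_subn //. }
rewrite Hh.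
have HMQ : (INR M <= INR N * Q)%R.
{ rewrite HMN. have := @P_nonneg (INR k) kp j s0 Hs0. nra. }
have HMN' : (INR M <= INR N)%R by apply le_INR; apply/leP.
apply (Rmult_lt_reg_r (INR N ^ 2)); first nra.
have -> : ((INR N - INR M + 1) ^ 2 / INR N ^ 2 * INR N ^ 2 = (INR N - INR M + 1) ^ 2)%R
  by field; lra.
nra.
Qed.
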